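(* For every integer $k \geq 2$, there exists a $k$-de Bruijn L-array.
   Context: Fix an integer $k\ge 2$. Consider a $k \times k^2$ array $A$ with entries in $\{0,\dots,k-1\}$, with rows indexed by $i\in\{0,\dots,k-1\}$ and columns by $j\in\{0,\dots,k^2-1\}$, regarded cyclically (row indices taken mod $k$, column indices taken mod $k^2$, i.e. the left side is glued to the right side and the top to the bottom). An L-position is a pair $(i,j)$ with $0\le i\le k-1$, $0\le j\le k^2-1$; the L-filling read at $(i,j)$ is the triple $(a,b,d)=(A(i,j),\,A(i+1 \bmod k,\,j),\,A(i+1 \bmod k,\,j+1 \bmod k^2))$, i.e. a $2\times 2$ block with its upper-right cell removed: $a$ is the upper-left cell, $b$ the cell directly below $a$, and $d$ the cell directly to the right of $b$. There are $k^3$ L-positions and $k^3$ possible triples in $\{0,\dots,k-1\}^3$. The array $A$ is a $k$-de Bruijn L-array if every triple $(a,b,d)\in\{0,\dots,k-1\}^3$ is the L-filling read at exactly one L-position. *)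

(* Defs.v *)
From mathcomp Require Import all_boot.
Set Implicit Arguments. Unset Strict Implicit. Unset Printing Implicit Defensive.

(* A k x k^2 array with entries in {0,...,k-1}; rows 'I_k, columns 'I_(k^2),
   indices taken cyclically (ordS = successor mod n). *)
Definition Larray (k : nat) := 'I_k -> 'I_(k ^ 2) -> 'I_k.

Definition Lfilling (k : nat) (A : Larray k) (p : 'I_k * 'I_(k ^ 2))
  : 'I_k * 'I_k * 'I_k :=
  let: (i, j) := p in
  (A i j, A (ordS i) j, A (ordS i) (ordS j)).

Definition is_deBruijn_Larray (k : nat) (A : Larray k) : Prop :=
  forall t : 'I_k * 'I_k * 'I_k,
    #|[pred p : 'I_k * 'I_(k ^ 2) | Lfilling A p == t]| = 1.

(* Main.v *)
Require Import Defs.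
From mathcomp Require Import all_boot.
From mathcomp Require Import zify.

Section Aux.
Variable k : nat.
Hypothesis kpos : 0 < k.

Definition V (i j : nat) := (j %/ k + i * (j %% k)) %% k.

Lemma modDr_cong q x y : x = y %[mod k] -> q + x = q + y %[mod k].
Proof. by move=> H; rewrite -modnDmr H modnDmr. Qed.

Lemma succ_mod_mul i r : (i.+1 %% k) * r = i.+1 * r %[mod k].
Proof. by rewrite modnMml. Qed.

Lemma Vmod x j : V (x %% k) j = V x j.
Proof. by rewrite /V -modnDmr modnMml modnDmr. Qed.

Lemma F1 i j : V (i.+1 %% k) j = V i j + j %% k %[mod k].
Proof.
rewrite /V modnDml modn_mod -modnDmr succ_mod_mul modnDmr.
congr (_ %% _); rewrite mulSn; nia.
Qed.

Lemma jdec j : j < k * k -> j %/ k < k.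
Proof. by move=> H; rewrite ltn_divLR. Qed.

Lemma F2 i j : j < k * k -> (j %% k).+1 < k ->
  (j.+1 %% (k * k)) %/ k = j %/ k /\ (j.+1 %% (k * k)) %% k = (j %% k).+1 /\
  V (i.+1 %% k) (j.+1 %% (k * k)) = V (i.+1 %% k) j + i.+1 %[mod k].
Proof.
move=> Hj Hr.
have Hq := jdec j Hj.
have Ej : j.+1 = j %/ k * k + (j %% k).+1 by rewrite addnS -divn_eq.
have Hs : j.+1 < k * k.
  rewrite Ej; apply: (@leq_trans ((j %/ k).+1 * k)); first by rewrite mulSn addnC ltn_add2r.
  by rewrite leq_mul2r Hq orbT.
rewrite (modn_small Hs).
have E1 : j.+1 %/ k = j %/ k by rewrite Ej divnMDl // (divn_small Hr) addn0.
have E2 : j.+1 %% k = (j %% k).+1 by rewrite Ej modnMDl; apply: modn_small.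
split => //; split => //.
rewrite !Vmod /V E1 E2 modnDml.
rewrite modn_mod; congr (_ %% _); rewrite mulnS; nia.
Qed.

Lemma F3 i j : j < k * k -> (j %% k).+1 = k ->
  V (i.+1 %% k) (j.+1 %% (k * k)) = (j %/ k).+1 %[mod k] /\
  V i j + i = j %/ k %[mod k].
Proof.
move=> Hj Hr.
have Ej : j.+1 = (j %/ k).+1 * k by rewrite {1}(divn_eq j k) -addnS Hr mulSn addnC.
rewrite Ej -muln_modl Vmod /V.
have -> : (j %/ k).+1 %% k * k %/ k = (j %/ k).+1 %% k by rewrite mulnK.
have -> : (j %/ k).+1 %% k * k %% k = 0 by rewrite modnMl.
split; first by rewrite muln0 addn0 !modn_mod.
rewrite modnDml.
have -> : j %% k = k.-1 by rewrite -[in RHS]Hr.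
have -> : j %/ k + i * k.-1 + i = i * k + j %/ k.
  by case: (k) kpos => // k' _; rewrite /= mulnS; nia.
by rewrite modnMDl.
Qed.

Lemma small_eq x y : x < k -> y < k -> x = y %[mod k] -> x = y.
Proof. by move=> hx hy; rewrite !modn_small. Qed.

Lemma Vlt x y : V x y < k.
Proof. exact: ltn_pmod. Qed.

Lemma Vinj i j i2 j2 : i < k -> j < k * k -> i2 < k -> j2 < k * k ->
 V i j = V i2 j2 -> V (i.+1 %% k) j = V (i2.+1 %% k) j2 ->
 V (i.+1 %% k) (j.+1 %% (k * k)) = V (i2.+1 %% k) (j2.+1 %% (k * k)) ->
 i = i2 /\ j = j2.
Proof.
move=> hi hj hi2 hj2 Ea Eb Ed.
have Er : j %% k = j2 %% k.
  apply: small_eq; rewrite ?ltn_pmod //.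
  apply/eqP; rewrite -(eqn_modDl (V i j)); apply/eqP.
  by rewrite -F1 Ea -F1 Eb.
have hq := jdec j hj; have hq2 := jdec j2 hj2.
have jE : j %/ k = j2 %/ k -> j = j2.
  by move=> Eq; rewrite (divn_eq j k) (divn_eq j2 k) Eq Er.
have hr : (j %% k) < k by rewrite ltn_pmod.
move: (hr); rewrite leq_eqVlt => /orP [/eqP Hr|Hr]; first last.
- have [_ [_ D1]] := F2 i j hj Hr.
  rewrite Er in Hr.
  have [_ [_ D2]] := F2 i2 j2 hj2 Hr.
  have Ei : i = i2.
    apply: small_eq => //; apply/eqP; rewrite -(eqn_modDl (V (i.+1 %% k) j)) -(eqn_modDr 1) -!addnA !addn1; apply/eqP.
    by rewrite -D1 Ed D2 Eb.
  split => //; apply: jE; subst i2.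
  apply: small_eq => //; apply/eqP; rewrite -(eqn_modDr (i * (j %% k))); apply/eqP.
  move: Ea; rewrite /V Er => ->; done.
- have [D1 A1] := F3 i j hj Hr.
  rewrite Er in Hr.
  have [D2 A2] := F3 i2 j2 hj2 Hr.
  have Eq : j %/ k = j2 %/ k.
    apply: small_eq => //; apply/eqP; rewrite -(eqn_modDr 1) !addn1; apply/eqP.
    by rewrite -D1 Ed D2.
  split; last exact: jE.
  apply: small_eq => //; apply/eqP; rewrite -(eqn_modDl (V i j)); apply/eqP.
  by rewrite A1 Eq -A2 Ea.
Qed.
End Aux.

Theorem theorem2 (k : nat) (hk : 2 <= k) :
  exists A : Larray k, is_deBruijn_Larray A.
Proof.
have kpos : 0 < k by apply: ltnW.
pose A : Larray k := fun i j => Ordinal (ltn_pmod (j %/ k + i * (j %% k)) kpos).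
exists A.
have inj : injective (Lfilling A).
  move=> [i j] [i2 j2]; rewrite /Lfilling => [[]].
  move=> E1 E2 E3.
  have [Ei Ej] := @Vinj k kpos i j i2 j2 (ltn_ord i) (ltn_ord j) (ltn_ord i2) (ltn_ord j2) E1 E2 E3.
  by congr pair; apply: val_inj.
move=> t.
have : t \in codom (Lfilling A).
  by apply: inj_card_onto => //; rewrite !card_prod !card_ord mulnA.
case/codomP => x ->.
rewrite -[RHS](card1 x); apply: eq_card => y.
by rewrite !inE (inj_eq inj).
Qed.
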